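(* Let $|\psi_{{\sf A}{\sf B}}\rangle\in\mathbb C^{d_{\sf A}}\otimes\mathbb C^{d_{\sf B}}$ be a unit vector and $\hat F_{\sf B}=\sum_i\alpha_i|\phi_i\rangle\langle\phi_i|^{\otimes2}$ with unit vectors $\phi_i\in\mathbb C^{d_{\sf B}}$ and $\alpha_i>0$ (acting on factors $2,4$). Define $\bar\omega_{{\sf A}|F_{\sf B}}=\mathrm{tr}_{\sf B}\big(S_{\sf A}\hat F_{\sf B}|\psi_{{\sf A}{\sf B}}\rangle\langle\psi_{{\sf A}{\sf B}}|^{\otimes2}\big)+\mathrm{tr}\big(|\psi_{{\sf A}{\sf B}}\rangle\langle\psi_{{\sf A}{\sf B}}|^{\otimes2}A_{\sf A}A_{\sf B}\big)\frac{\mathrm{tr}(\hat F_{\sf B})}{\mathrm{tr}(S_{\sf B})}\tilde S_{\sf A}$, and, when $\mathrm{tr}(\bar\omega_{{\sf A}|F_{\sf B}})>0$, the normalised conditional state $\tilde\omega_{{\sf A}|F_{\sf B}}=\bar\omega_{{\sf A}|F_{\sf B}}/\mathrm{tr}(\bar\omega_{{\sf A}|F_{\sf B}})$. Then $\tilde\omega_{{\sf A}|F_{\sf B}}$ belongs to the convex hull of $\{|\varphi\rangle\langle\varphi|^{\otimes2}:\varphi\in\mathbb C^{d_{\sf A}},\ \|\varphi\|=1\}$.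
   Context: $|\psi_{{\sf A}{\sf B}}\rangle^{\otimes2}$ is regarded as a vector in $\mathbb C^{d_{\sf A}}_1\otimes\mathbb C^{d_{\sf B}}_2\otimes\mathbb C^{d_{\sf A}}_3\otimes\mathbb C^{d_{\sf B}}_4$; $\mathrm{tr}_{\sf B}$ is the partial trace over factors $2,4$. $S_{\sf A}$, $A_{\sf A}$ are the projectors onto the symmetric and antisymmetric subspaces of $\mathbb C^{d_{\sf A}}_1\otimes\mathbb C^{d_{\sf A}}_3$; $S_{\sf B}$, $A_{\sf B}$ those of $\mathbb C^{d_{\sf B}}_2\otimes\mathbb C^{d_{\sf B}}_4$ (extended by identities where needed); $\tilde S_{\sf A}=S_{\sf A}/\mathrm{tr}S_{\sf A}$. *)

(* Defs.v *)
From HB Require Import structures.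
From mathcomp Require Import all_boot all_order all_algebra all_field.
Set Implicit Arguments. Unset Strict Implicit. Unset Printing Implicit Defensive.
Import Order.TTheory GRing.Theory Num.Theory.
Local Open Scope ring_scope.

(* Operators on the Hilbert space C^I (I a finite index set), as kernels. *)
Definition op (I : finType) := I -> I -> algC.

Definition opmul (I : finType) (X Y : op I) : op I :=
  fun i j => \sum_k X i k * Y k j.
Definition optr (I : finType) (X : op I) : algC := \sum_i X i i.
Definition opscale (I : finType) (c : algC) (X : op I) : op I :=
  fun i j => c * X i j.
Definition opadd (I : finType) (X Y : op I) : op I := fun i j => X i j + Y i j.
Definition opid (I : finType) : op I := fun i j => (i == j)%:R.

Definition unitvec (I : finType) (v : I -> algC) : Prop :=
  \sum_i `|v i| ^+ 2 = 1.
Definition ketbra (I : finType) (v : I -> algC) : op I :=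
  fun i j => v i * (v j)^*.
Definition vec2 (I : finType) (v : I -> algC) : (I * I)%type -> algC :=
  fun p => v p.1 * v p.2.

Definition swapop (I : finType) : op (I * I)%type :=
  fun p q => ((p.1 == q.2) && (p.2 == q.1))%:R.
Definition symP (I : finType) : op (I * I)%type :=
  fun p q => (@opid _ p q + swapop p q) / 2%:R.
Definition antiP (I : finType) : op (I * I)%type :=
  fun p q => (@opid _ p q - swapop p q) / 2%:R.

(* Full space C^A_1 (x) C^B_2 (x) C^A_3 (x) C^B_4, indexed by ((a1,b2),(a3,b4)).
   liftAB X Y = X acting on factors 1,3 tensored with Y acting on factors 2,4. *)
Definition liftAB (A B : finType) (X : op (A * A)%type) (Y : op (B * B)%type)
  : op ((A * B) * (A * B))%type :=
  fun x y => X (x.1.1, x.2.1) (y.1.1, y.2.1) * Y (x.1.2, x.2.2) (y.1.2, y.2.2).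

Definition ptrB (A B : finType) (Z : op ((A * B) * (A * B))%type) : op (A * A)%type :=
  fun p q => \sum_(b : B * B) Z ((p.1, b.1), (p.2, b.2)) ((q.1, b.1), (q.2, b.2)).

Definition Fhat (n N : nat) (alpha : 'I_N -> algC) (phi : 'I_N -> 'I_n -> algC)
  : op ('I_n * 'I_n)%type :=
  fun p q => \sum_i alpha i * ketbra (vec2 (phi i)) p q.

Definition omegabar (m n N : nat) (psi : ('I_m * 'I_n)%type -> algC)
  (alpha : 'I_N -> algC) (phi : 'I_N -> 'I_n -> algC) : op ('I_m * 'I_m)%type :=
  let rho := ketbra (vec2 psi) in
  let F := Fhat alpha phi in
  let SA := @symP 'I_m in
  let SB := @symP 'I_n in
  let AA := @antiP 'I_m in
  let AB := @antiP 'I_n in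
  let SAt := opscale (optr SA)^-1 SA in
  opadd (ptrB (opmul (opmul (liftAB SA (@opid _)) (liftAB (@opid _) F)) rho))
        (opscale (optr (opmul rho (opmul (liftAB AA (@opid _)) (liftAB (@opid _) AB)))
                  * optr F / optr SB) SAt).

Definition in_sym_sep_hull (m : nat) (X : op ('I_m * 'I_m)%type) : Prop :=
  exists (K : nat) (w : 'I_K -> algC) (v : 'I_K -> 'I_m -> algC),
    [/\ (forall k, 0 <= w k), \sum_k w k = 1, (forall k, unitvec (v k)) &
        forall p q, X p q = \sum_k w k * ketbra (vec2 (v k)) p q].

(* Main.v *)
Require Import Defs.
From mathcomp Require Import all_boot all_order all_algebra all_field.
From mathcomp Require Import ring lra zify.
Import Order.TTheory GRing.Theory Num.Theory.
Local Open Scope ring_scope.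
Set Implicit Arguments. Unset Strict Implicit. Unset Printing Implicit Defensive.


Definition cone (m : nat) (X : op ('I_m * 'I_m)%type) : Prop :=
  exists (K : nat) (w : 'I_K -> algC) (v : 'I_K -> 'I_m -> algC),
    [/\ (forall k, 0 <= w k), (forall k, unitvec (v k)) &
        forall p q, X p q = \sum_k w k * ketbra (vec2 (v k)) p q].

Lemma cone_ext m (X Y : op ('I_m * 'I_m)%type) :
  (forall p q, X p q = Y p q) -> cone Y -> cone X.
Proof.
move=> e [K [w [v [h1 h2 h3]]]]; exists K, w, v; split=> // p q.
by rewrite e h3.
Qed.

Lemma cone0 m : cone (fun _ _ : ('I_m * 'I_m)%type => 0).
Proof.
exists 0%N, (fun _ => 0), (fun _ _ => 0); split=> //; first by case.
by move=> p q; rewrite big_ord0.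
Qed.

Lemma cone_add m (X Y : op ('I_m * 'I_m)%type) :
  cone X -> cone Y -> cone (fun p q => X p q + Y p q).
Proof.
move=> [K1 [w1 [v1 [a1 b1 c1]]]] [K2 [w2 [v2 [a2 b2 c2]]]].
exists (K1 + K2)%N, (fun k => match split k with inl i => w1 i | inr j => w2 j end),
  (fun k => match split k with inl i => v1 i | inr j => v2 j end); split.
- by move=> k; case: (split k).
- by move=> k; case: (split k).
move=> p q; rewrite big_split_ord /= c1 c2; congr (_ + _); apply: eq_bigr => i _.
  by have := unsplitK (inl i : 'I_K1 + 'I_K2); rewrite /= => ->.
by have := unsplitK (inr i : 'I_K1 + 'I_K2); rewrite /= => ->.
Qed.

Lemma cone_scale m (c : algC) (X : op ('I_m * 'I_m)%type) :
  0 <= c -> cone X -> cone (fun p q => c * X p q).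
Proof.
move=> c0 [K [w [v [a b e]]]]; exists K, (fun k => c * w k), v; split=> //.
  by move=> k; rewrite mulr_ge0.
by move=> p q; rewrite e mulr_sumr; apply: eq_bigr => k _; rewrite mulrA.
Qed.

Lemma cone_sum m (T : Type) (s : seq T) (F : T -> op ('I_m * 'I_m)%type) :
  (forall t, cone (F t)) -> cone (fun p q => \sum_(t <- s) F t p q).
Proof.
move=> h; elim: s => [|t s IH].
  by apply: cone_ext (cone0 m) => p q; rewrite big_nil.
apply: cone_ext (cone_add (h t) IH) => p q; by rewrite big_cons.
Qed.

Lemma sqrtC_real (x : algC) : 0 <= x -> (sqrtC x)^* = sqrtC x.
Proof. by move=> x0; rewrite geC0_conj // sqrtC_ge0. Qed.

Lemma cone_rank1 m (c : algC) (v : 'I_m -> algC) :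
  0 <= c -> cone (fun p q => c * ketbra (vec2 v) p q).
Proof.
move=> c0; set Nv := \sum_i `|v i| ^+ 2.
have N0 : 0 <= Nv by apply: sumr_ge0 => i _; rewrite exprn_ge0.
have [Nz|Nnz] := eqVneq Nv 0.
  have vz : forall i, v i = 0.
    move=> i; apply/eqP; rewrite -normr_eq0 -sqrf_eq0; apply/eqP.
    apply/eqP; move/eqP: Nz; rewrite psumr_eq0; last by move=> j _; rewrite exprn_ge0.
    by move/allP => /(_ i (mem_index_enum i)) /=.
  apply: cone_ext (cone0 m) => p q; by rewrite /ketbra /vec2 !vz !mul0r mulr0.
set s := sqrtC Nv.
have s0 : s != 0 by rewrite sqrtC_eq0.
have sc : s^* = s by rewrite sqrtC_real.
have s2 : s ^+ 2 = Nv by rewrite sqrtCK.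
exists 1%N, (fun _ => c * Nv ^+ 2), (fun _ i => v i / s); split.
- by move=> _; rewrite mulr_ge0 // exprn_ge0.
- move=> _; rewrite /unitvec.
  under eq_bigr => i _ do rewrite normrM exprMn normfV.
  rewrite -mulr_suml -/Nv exprVn normCK sc -expr2 s2 mulfV //.
move=> p q; rewrite big_ord1 /ketbra /vec2 !rmorphM /= !fmorphV /= sc.
rewrite -s2; field; done.
Qed.


Lemma sum_pair (I J : finType) (F : (I * J)%type -> algC) :
  \sum_(p : I * J) F p = \sum_i \sum_j F (i, j).
Proof. by rewrite pair_bigA; apply: eq_bigr; case. Qed.

Lemma tr_rank1 m (v : 'I_m -> algC) : unitvec v -> optr (ketbra (vec2 v)) = 1.
Proof.
rewrite /unitvec /optr => h; rewrite sum_pair.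
transitivity ((\sum_i `|v i| ^+ 2) * (\sum_i `|v i| ^+ 2)); last by rewrite h mulr1.
rewrite mulr_suml; apply: eq_bigr => i _; rewrite mulr_sumr; apply: eq_bigr => j _.
by rewrite /ketbra /vec2 /= !normCK rmorphM /=; ring.
Qed.

Lemma hull_of_cone m (X : op ('I_m * 'I_m)%type) :
  cone X -> 0 < optr X -> in_sym_sep_hull (opscale (optr X)^-1 X).
Proof.
move=> [K [w [v [a b e]]]] tp.
have trX : optr X = \sum_k w k.
  rewrite /optr; under eq_bigr => p _ do rewrite e.
  rewrite exchange_big /=; apply: eq_bigr => k _.
  by rewrite -mulr_sumr -/(optr _) tr_rank1 ?mulr1.
exists K, (fun k => (optr X)^-1 * w k), v; split=> //.
- by move=> k; rewrite mulr_ge0 // invr_ge0 ltW.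
- by rewrite -mulr_sumr -trX mulVf // lt0r_neq0.
by move=> p q; rewrite /opscale e mulr_sumr; apply: eq_bigr => k _; rewrite mulrA.
Qed.


Lemma sum_delta (I : finType) (i : I) (G : I -> algC) :
  \sum_j (i == j)%:R * G j = G i.
Proof.
rewrite (bigD1 i) //= eqxx mul1r big1; first by rewrite addr0.
by move=> j /negPf; rewrite eq_sym => ->; rewrite mul0r.
Qed.

Lemma prod_delta (I : finType) (a : I) (z : algC) (g : I -> nat) :
  \prod_x z ^+ ((x == a) * g x)%N = z ^+ g a.
Proof.
rewrite (bigD1 a) //= eqxx mul1n big1; first by rewrite mulr1.
by move=> j /negPf ->; rewrite mul0n expr0.
Qed.

Lemma i4 : 'i ^+ 4 = 1 :> algC.
Proof. by rewrite (exprM _ 2 2) sqrCi sqrrN expr1n. Qed.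

Lemma i3 : 'i ^+ 3 = - 'i :> algC.
Proof. by rewrite exprS sqrCi mulrN1. Qed.

Lemma sum_roots (e : nat) :
  \sum_(k < 4) 'i ^+ (e * k) = if (e %% 4 == 0)%N then 4 else 0 :> algC.
Proof.
under eq_bigr => k _ do rewrite exprM.
have -> : 'i ^+ e = 'i ^+ (e %% 4) :> algC.
  by rewrite {1}(divn_eq e 4) exprD mulnC exprM i4 expr1n mul1r.
have : (e %% 4 < 4)%N by rewrite ltn_mod.
case: (e %% 4)%N => [|[|[|[|r]]]] // _;
  rewrite !big_ord_recl big_ord0 /= ?expr0 ?expr1n //=.
all: rewrite /bump /= ?addn0 ?addn1 ?addnS -?exprM /=.
- ring.
- change (1 + ('i ^+ 1 + ('i ^+ 2 + ('i ^+ 3 + 0))) = 0 :> algC).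
  by rewrite expr1 sqrCi i3; ring.
- change (1 + ('i ^+ 2 + ('i ^+ (2 * 2) + ('i ^+ (2 * 3) + 0))) = 0 :> algC).
  by rewrite sqrCi (exprM _ 2 2) (exprM _ 2 3) sqrCi; ring.
- change (1 + ('i ^+ 3 + ('i ^+ (3 * 2) + ('i ^+ (3 * 3) + 0))) = 0 :> algC).
  by rewrite i3 (exprM _ 3 2) (exprM _ 3 3) i3 (exprS (- 'i) 2) !sqrrN sqrCi; ring.
Qed.


Definition ex m (p1 p2 q1 q2 : 'I_m) (x : 'I_m) : nat :=
  ((x == p1) + (x == p2) + 3 * (x == q1) + 3 * (x == q2))%N.

Lemma ex_bad m (p1 p2 q1 q2 : 'I_m) :
  ~~ (((p1 == q1) && (p2 == q2)) || ((p1 == q2) && (p2 == q1))) ->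
  exists x, (ex p1 p2 q1 q2 x %% 4 != 0)%N.
Proof.
rewrite /ex.
case: (eqVneq p1 p2) => [<-|n12].
  case: (eqVneq p1 q1) => [<-|n1].
    case: (eqVneq p1 q2) => [<-|n2]; first by rewrite ?eqxx.
    by move=> _; exists p1; rewrite ?eqxx (negPf n2).
  by move=> _; exists p1; rewrite ?eqxx (negPf n1); case: (p1 == q2).
have n21 : p2 != p1 by rewrite eq_sym.
case: (eqVneq p1 q1) => [<-|n1].
  case: (eqVneq p2 q2) => [<-|n2]; first by rewrite ?eqxx.
  by move=> _; exists p2; rewrite ?eqxx ?(negPf n21) (negPf n2).
case: (eqVneq p1 q2) => [<-|n2].
  case: (eqVneq p2 q1) => [<-|n3]; first by rewrite ?eqxx orbT.
  by move=> _; exists p2; rewrite ?eqxx ?(negPf n21) (negPf n3).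
by move=> _; exists p1; rewrite ?eqxx (negPf n12) (negPf n1) (negPf n2).
Qed.

Lemma char_sum m (p q : 'I_m * 'I_m) :
  \sum_(f : {ffun 'I_m -> 'I_4}) ketbra (vec2 (fun a => 'i ^+ f a)) p q
   = 4%:R ^+ m * ((p == q) || (p == (q.2, q.1)))%:R.
Proof.
case: p => p1 p2; case: q => q1 q2 /=.
rewrite /ketbra /vec2 /=.
have split_e : forall x k, 'i ^+ (ex p1 p2 q1 q2 x * k) =
   'i ^+ ((x == p1) * k) * 'i ^+ ((x == p2) * k) * ('i ^+ 3) ^+ ((x == q1) * k)
   * ('i ^+ 3) ^+ ((x == q2) * k) :> algC.
  move=> x k; rewrite -!exprM -!exprD /ex; congr (_ ^+ _); lia.
have step : forall f : {ffun 'I_m -> 'I_4},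
  'i ^+ f p1 * 'i ^+ f p2 * ('i ^+ f q1 * 'i ^+ f q2)^* =
  \prod_x 'i ^+ (ex p1 p2 q1 q2 x * f x) :> algC.
  move=> f; rewrite (eq_bigr _ (fun x _ => split_e x (f x))).
  rewrite !big_split /= !prod_delta rmorphM /= !rmorphXn /= conjCi -i3.
  by rewrite mulrA.
under eq_bigr => f _ do rewrite step.
rewrite -(bigA_distr_bigA (fun (x : 'I_m) (k : 'I_4) => 'i ^+ (ex p1 p2 q1 q2 x * k) : algC)) /=.
under eq_bigr => x _ do rewrite sum_roots.
rewrite !xpair_eqE.
have [cond|ncond] := boolP (((p1 == q1) && (p2 == q2)) || ((p1 == q2) && (p2 == q1))).
  rewrite mulr1 (eq_bigr (fun _ => 4%:R)); last first.
    move=> x _; rewrite ifT //.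
    case/orP: cond => /andP [/eqP -> /eqP ->]; rewrite /ex;
      by case: (x == q1); case: (x == q2).
  by rewrite prodr_const card_ord.
rewrite mulr0; have [x hx] := ex_bad ncond.
by rewrite (bigD1 x) //= ifN // mul0r.
Qed.


Lemma bool_id m (p1 p2 q1 q2 : 'I_m) :
  (((p1 == q1) && (p2 == q2)) + ((p1 == q2) && (p2 == q1)) =
  ((p2 == p1) && (q1 == p1) && (q2 == p1)) +
  (((p1 == q1) && (p2 == q2)) || ((p1 == q2) && (p2 == q1))))%N.
Proof.
case: (eqVneq p1 q1) => [<-|n1]; case: (eqVneq p2 q2) => [<-|n2];
case: (eqVneq p1 q2) => [e3|n3]; case: (eqVneq p2 q1) => [e4|n4];
case: (eqVneq p1 p2) => [e5|n5]; subst => //=; rewrite ?eqxx /=.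
all: match goal with H : is_true (?x != ?x) |- _ => by rewrite eqxx in H end.
Qed.

Lemma symP_cone m : cone (@symP 'I_m).
Proof.
pose e (a : 'I_m) := fun i : 'I_m => ((i == a)%:R : algC).
pose vf (f : {ffun 'I_m -> 'I_4}) := fun a : 'I_m => ('i ^+ f a : algC).
have h4 : (4%:R ^+ m : algC) != 0 by rewrite expf_neq0 // pnatr_eq0.
apply: (@cone_ext _ _ (fun p q => \sum_a (2%:R^-1 * ketbra (vec2 (e a)) p q)
   + \sum_f ((2%:R^-1 / 4%:R ^+ m) * ketbra (vec2 (vf f)) p q))).
  move=> [p1 p2] [q1 q2]; rewrite -mulr_sumr -mulr_sumr char_sum.
  rewrite /ketbra /vec2 /e /=.
  under eq_bigr => a _ do rewrite rmorphM /= !conjC_nat -!mulrA.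
  rewrite sum_delta /symP /opid /swapop /= xpair_eqE.
  rewrite xpair_eqE.
  have -> : forall x : algC, 2%:R^-1 / 4%:R ^+ m * (4%:R ^+ m * x) = 2%:R^-1 * x.
    by move=> x; field.
  by rewrite -mulrDr -!natrM !mulnb andbA -!natrD bool_id mulrC.
apply: cone_add; apply: cone_sum => t; apply: cone_rank1.
  by rewrite invr_ge0 ler0n.
by rewrite mulr_ge0 // invr_ge0 ?ler0n // exprn_ge0 // ler0n.
Qed.


Lemma sum_single (I : finType) (k0 : I) (F : I -> algC) :
  (forall k, k != k0 -> F k = 0) -> \sum_k F k = F k0.
Proof.
move=> h; rewrite (bigD1 k0) //= big1; first by rewrite addr0.
by move=> k hk; apply: h.
Qed.

Lemma liftmul (A B : finType) (X : op (A * A)%type) (Y : op (B * B)%type) x y :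
  opmul (liftAB X (@opid _)) (liftAB (@opid _) Y) x y =
  X (x.1.1, x.2.1) (y.1.1, y.2.1) * Y (x.1.2, x.2.2) (y.1.2, y.2.2).
Proof.
rewrite /opmul (@sum_single _ ((y.1.1, x.1.2), (y.2.1, x.2.2))).
  by rewrite /liftAB /opid /= !eqxx mulr1 mul1r.
move=> [[a1 b1] [a2 b2]] hk; rewrite /liftAB /opid /=.
case: (eqVneq (x.1.2, x.2.2) (b1, b2)) => [e1|n1]; last by rewrite mulr0 mul0r.
case: (eqVneq (a1, a2) (y.1.1, y.2.1)) => [e2|n2]; last by rewrite mul0r mulr0.
by move/eqP: hk; case; case: e1 => <- <-; case: e2 => -> ->.
Qed.

Lemma sum_AB (A B : finType) (G : ((A * B) * (A * B))%type -> algC) :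
  \sum_k G k = \sum_(ka : A * A) \sum_(kb : B * B) G ((ka.1, kb.1), (ka.2, kb.2)).
Proof.
transitivity (\sum_a1 \sum_b1 \sum_a2 \sum_b2 G ((a1, b1), (a2, b2))).
  rewrite sum_pair sum_pair; apply: eq_bigr => a1 _; apply: eq_bigr => b1 _.
  by rewrite sum_pair.
rewrite sum_pair; apply: eq_bigr => a1 _.
rewrite exchange_big; apply: eq_bigr => a2 _.
by rewrite sum_pair.
Qed.


Definition uvec m n (psi : ('I_m * 'I_n)%type -> algC) (ph : 'I_n -> algC) (a : 'I_m) :=
  \sum_c (ph c)^* * psi (a, c).

Lemma prod_sums (I : finType) (F G : I -> algC) :
  (\sum_i F i) * (\sum_j G j) = \sum_(p : I * I) F p.1 * G p.2.
Proof. by rewrite big_distrlr pair_bigA. Qed.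

Lemma core m n N (psi : ('I_m * 'I_n)%type -> algC)
  (alpha : 'I_N -> algC) (phi : 'I_N -> 'I_n -> algC) (ka q : 'I_m * 'I_m) :
  \sum_(b : 'I_n * 'I_n) \sum_(kb : 'I_n * 'I_n) Fhat alpha phi b kb *
     (psi (ka.1, kb.1) * psi (ka.2, kb.2) * (psi (q.1, b.1) * psi (q.2, b.2))^*)
  = \sum_i alpha i * (uvec psi (phi i) ka.1 * uvec psi (phi i) ka.2 *
                      (uvec psi (phi i) q.1 * uvec psi (phi i) q.2)^*).
Proof.
rewrite /Fhat.
under eq_bigr => b _ do under eq_bigr => kb _ do rewrite mulr_suml.
under eq_bigr => b _ do rewrite exchange_big.
rewrite exchange_big; apply: eq_bigr => i _.
rewrite /uvec !prod_sums rmorph_sum /= prod_sums mulr_sumr exchange_big.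
rewrite [RHS]sum_pair; apply: eq_bigr => kb _; apply: eq_bigr => b _.
rewrite /ketbra /vec2 !rmorphM /= !conjCK; ring.
Qed.

Lemma sym_apply (I : finType) (G : (I * I)%type -> algC) p :
  (forall a b, G (a, b) = G (b, a)) -> \sum_k symP p k * G k = G p.
Proof.
move=> hG.
transitivity (2%:R^-1 * (\sum_k opid p k * G k + \sum_k swapop p k * G k)).
  rewrite -big_split mulr_sumr; apply: eq_bigr => k _; rewrite /symP.
  change ((opid p k + swapop p k) / 2%:R * G k = 2%:R^-1 * (opid p k * G k + swapop p k * G k)); ring.
rewrite /opid sum_delta (@sum_single _ (p.2, p.1)).
  case: p => a b; rewrite /swapop /= !eqxx /= mul1r hG; by field.
move=> [a b] hk; rewrite /swapop /=.
case: (eqVneq p.1 b) => [e1|n1]; last by rewrite /= mul0r.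
case: (eqVneq p.2 a) => [e2|n2]; last by rewrite /= mul0r.
by move: hk; rewrite -e1 -e2 eqxx.
Qed.

Lemma first_term m n N (psi : ('I_m * 'I_n)%type -> algC)
  (alpha : 'I_N -> algC) (phi : 'I_N -> 'I_n -> algC) p q :
  ptrB (opmul (opmul (liftAB (@symP 'I_m) (@opid _)) (liftAB (@opid _) (Fhat alpha phi)))
     (ketbra (vec2 psi))) p q
  = \sum_i alpha i * ketbra (vec2 (uvec psi (phi i))) p q.
Proof.
rewrite /ptrB.
have E : forall x y, opmul (opmul (liftAB (@symP 'I_m) (@opid _))
    (liftAB (@opid _) (Fhat alpha phi))) (ketbra (vec2 psi)) x y =
   \sum_k (symP (x.1.1, x.2.1) (k.1.1, k.2.1) * Fhat alpha phi (x.1.2, x.2.2) (k.1.2, k.2.2))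
     * (psi k.1 * psi k.2 * (psi y.1 * psi y.2)^*).
  by move=> x y; rewrite {1}/opmul; apply: eq_bigr => k _; rewrite liftmul.
under eq_bigr => b _ do rewrite E sum_AB /=.
rewrite exchange_big /=.
under eq_bigr => ka _ do under eq_bigr => b _ do under eq_bigr => kb _ do rewrite -mulrA.
under eq_bigr => ka _ do under eq_bigr => b _ do rewrite -mulr_sumr.
under eq_bigr => ka _ do rewrite -mulr_sumr core.
rewrite sym_apply //.
move=> a b; apply: eq_bigr => i _; congr (_ * (_ * _)); rewrite mulrC //.
Qed.


Definition chi (I : finType) (g p : (I * I)%type) : algC :=
  ((p.2, p.1) == g)%:R - (p == g)%:R.

Lemma antiP_gram (I : finType) (p q : (I * I)%type) :
  antiP p q = \sum_g (chi g p * chi g q) / 4%:R.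
Proof.
rewrite -mulr_suml /chi.
under eq_bigr => g _ do rewrite mulrBl !mulrBr.
rewrite !sumrB !sum_delta.
case: p => p1 p2; case: q => q1 q2; rewrite /antiP /opid /swapop /= !xpair_eqE.
rewrite [q1 == p1]eq_sym [q2 == p2]eq_sym [q1 == p2]eq_sym [q2 == p1]eq_sym.
rewrite [(p1 == q2) && (p2 == q1)]andbC.
rewrite [(p2 == q2) && _]andbC.
set a := ((p1 == q1) && (p2 == q2))%:R; set b := ((p2 == q1) && (p1 == q2))%:R.
by field.
Qed.

Lemma gram_psd (X J : finType) (Psi : X -> algC) (M : X -> X -> algC)
  (g : J -> X -> algC) :
  (forall k x, M k x = \sum_j g j k * (g j x)^*) ->
  0 <= \sum_x \sum_k Psi x * (Psi k)^* * M k x.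
Proof.
move=> hM.
have -> : \sum_x \sum_k Psi x * (Psi k)^* * M k x =
   \sum_j (\sum_x Psi x * (g j x)^*) * (\sum_x Psi x * (g j x)^*)^*.
  under eq_bigr => x _ do under eq_bigr => k _ do rewrite hM mulr_sumr.
  under eq_bigr => x _ do rewrite exchange_big.
  rewrite exchange_big; apply: eq_bigr => j _.
  rewrite rmorph_sum /= big_distrlr; apply: eq_bigr => x _; apply: eq_bigr => k _.
  by rewrite rmorphM /= conjCK; ring.
by apply: sumr_ge0 => j _; apply: mul_conjC_ge0.
Qed.

Lemma chi_real (I : finType) (g p : (I * I)%type) : (chi g p)^* = chi g p.
Proof. by rewrite /chi rmorphB /= !conjC_nat. Qed.

Lemma prod_sums2 (I J : finType) (F : I -> algC) (G : J -> algC) :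
  (\sum_i F i) * (\sum_j G j) = \sum_(p : I * J) F p.1 * G p.2.
Proof. by rewrite big_distrlr pair_bigA. Qed.

Lemma anti_tr_ge0 m n (psi : ('I_m * 'I_n)%type -> algC) :
  0 <= optr (opmul (ketbra (vec2 psi))
            (opmul (liftAB (@antiP 'I_m) (@opid _)) (liftAB (@opid _) (@antiP 'I_n)))).
Proof.
rewrite /optr /opmul /ketbra.
under eq_bigr => x _ do under eq_bigr => k _ do rewrite -/(opmul _ _ k x).
apply: (@gram_psd _ _ _ _
   (fun (j : (('I_m * 'I_m) * ('I_n * 'I_n))%type) (k : (('I_m * 'I_n) * ('I_m * 'I_n))%type) =>
      chi j.1 (k.1.1, k.2.1) * chi j.2 (k.1.2, k.2.2) / 4%:R)).
move=> k x; rewrite liftmul /= !antiP_gram prod_sums2.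
apply: eq_bigr => j _.
rewrite !rmorphM /= !chi_real fmorphV /= conjC_nat; ring.
Qed.


Lemma trS_ge0 (I : finType) : 0 <= optr (@symP I).
Proof.
by apply: sumr_ge0 => p _; rewrite /symP divr_ge0 ?addr_ge0 ?ler0n.
Qed.

Unset Implicit Arguments.

Theorem mainTheorem13 (m n N : nat) (psi : ('I_m * 'I_n)%type -> algC)
  (alpha : 'I_N -> algC) (phi : 'I_N -> 'I_n -> algC) :
  unitvec psi ->
  (forall i, 0 < alpha i) ->
  (forall i, unitvec (phi i)) ->
  0 < optr (omegabar psi alpha phi) ->
  in_sym_sep_hull (opscale (optr (omegabar psi alpha phi))^-1 (omegabar psi alpha phi)).
Proof.
move=> _ hal _ htr; apply: hull_of_cone htr.
have trF : 0 <= optr (Fhat alpha phi).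
  apply: sumr_ge0 => p _; apply: sumr_ge0 => i _.
  by apply: mulr_ge0; [exact: ltW | apply: mul_conjC_ge0].
rewrite /omegabar /opadd /opscale.
apply: cone_add.
  apply: (cone_ext (first_term psi alpha phi)).
  apply: cone_sum => i; apply: cone_rank1; exact: ltW.
apply: cone_scale; last apply: cone_scale; last exact: symP_cone.
  by rewrite mulr_ge0 ?invr_ge0 ?trS_ge0 // mulr_ge0 // anti_tr_ge0.
by rewrite invr_ge0 trS_ge0.
Qed.
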